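(* Let $G=\langle A\cup B\rangle$ be a CS group with $|X|\ge2$ whose rooted group $A$ is perfect and contains an element $a$ acting transitively on $X$. Then $G$ is not orbitwise-abelian, and for every generating set $S$ of $B$ the dynamical system $\Sigma_S$ is not eventually trivial; more precisely $A\subseteq\sigma_S(a,0)$, so $a\in\Sigma_S^k(\{a\})$ for all $k\ge1$.
   Context: Let $X$ be a nonempty set with distinguished letter $0$, $\dot X=X\setminus\{0\}$; $X^*$ is the free monoid on $X$ viewed as a rooted tree; $\mathrm{Aut}(X^* )$ acts on the right; sections are defined by $(u\star v).g=u.g\star v.(g|_u)$; elements of $\mathrm{Sym}(X)$ are rooted automorphisms; $\mathrm{St}(1)$ is the first layer stabiliser. A CS group is $G=\langle A\cup B\rangle$ with $A\le\mathrm{Sym}(X)$ transitive and $B\le\mathrm{St}(1)$ such that $b|_0=b$ for $b\in B$ and the $b|_x$ ($b\in B$, $x\in\dot X$) lie in $A$ and generate $A$. $\mathrm{st}_A(0)$ is the stabiliser of $0$; $\mathrm{orb}_c(0)$ the $\langle c\rangle$-orbit of $0$, $\ell_c(0)$ its length. $G$ is orbitwise-abelian if for every $a\in A$ the group $\langle b|_{0.c}:c\in\langle a\rangle\setminus\mathrm{st}_A(0),b\in B\rangle$ is abelian. $\mathrm{mp}_A(0,x)=\{c\in A:0.c=x\}$; $\mathfrak C(a,x)=\{cac^{-1}:c\in\mathrm{mp}_A(0,x)\}$; $\mathfrak X(a,x)=\bigcup_{c\in\mathfrak C(a,x)}\mathrm{orb}_c(0)\setminus\{0\}$. For $S\subseteq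 B$: $H_S(a,x)=\langle b|_y:y\in\mathfrak X(a,x),b\in S\rangle$, $\sigma_S(a,x)=\langle b|_{0.c}b|_{0.c^2}\cdots b|_{0.c^{\ell_c(0)-1}}:c\in\mathfrak C(a,x),b\in S\rangle\cdot H_S(a,x)'$ (derived subgroup), $\Sigma_S(P)=\bigcup_{a\in P}\bigcup_{x\in X}\sigma_S(a,x)$; eventually trivial: for every $a$ there is $n$ with $\Sigma_S^m(\{a\})\subseteq\{1_A\}$ for all $m>n$. *)

(* Defs.v *)
From HB Require Import structures.
From mathcomp Require Import all_boot all_fingroup.
From mathcomp Require Import boolp.

Set Implicit Arguments.
Unset Strict Implicit.
Unset Printing Implicit Defensive.
Local Open Scope group_scope.

Section CS.
Variables (X : finType) (x0 : X).

(* Elements of the free monoid X^*: words.  Tree maps are functions on words;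
   Aut(X^* ) acts on the right: u.g = g u, and the product g*h acts by
   u.(g*h) = (u.g).h, i.e. as the function  h \o g. *)
Definition wmap := seq X -> seq X.

Definition is_treeaut (g : wmap) : Prop :=
  [/\ (forall w, size (g w) = size w),
      (forall u v, take (size u) (g (u ++ v)) = g u)
    & bijective g].

(* section g|_u : (u v).g = u.g (v.(g|_u)) *)
Definition section (g : wmap) (u : seq X) : wmap :=
  fun v => drop (size u) (g (u ++ v)).

Definition in_St1 (g : wmap) : Prop := forall x : X, g [:: x] = [:: x].

(* the rooted automorphism given by a permutation p of X (mathcomp perms
   compose left-to-right: (p * q) x = q (p x), matching the right action) *)
Definition rooted (p : {perm X}) : wmap :=
  fun w => if w is x :: w' then p x :: w' else [::].

Definition is_sec (g : wmap) (y : X) (p : {perm X}) : Prop :=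
  forall v, section g [:: y] v = rooted p v.

(* the section g|_y viewed as an element of Sym(X) (only used when it is
   rooted, which is the case for b in B and y <> x0 in a CS group) *)
Definition secperm (g : wmap) (y : X) : {perm X} :=
  odflt 1%g [pick p : {perm X} | `[< is_sec g y p >] ].

Definition is_subgroup_aut (B : wmap -> Prop) : Prop :=
  [/\ forall b, B b -> is_treeaut b,
      B (fun w => w),
      (forall f g, B f -> B g -> B (g \o f))
    & (forall f, B f -> exists2 h, B h &
          (forall w, h (f w) = w) /\ (forall w, f (h w) = w))].

Inductive gen (S : wmap -> Prop) : wmap -> Prop :=
| gen_id : gen S (fun w => w)
| gen_S s : S s -> gen S s
| gen_mul f g : gen S f -> gen S g -> gen S (g \o f)
| gen_inv g f : gen S g -> (forall w, f (g w) = w) -> (forall w, g (f w) = w) ->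
                gen S f.

Definition generates (S B : wmap -> Prop) : Prop :=
  (forall s, S s -> B s) /\ (forall f, B f -> gen S f).

Definition CS_group (A : {group {perm X}}) (B : wmap -> Prop) : Prop :=
  [/\ [transitive A, on [set: X] | 'P] /\
      is_subgroup_aut B,
      (forall b, B b -> in_St1 b),
      (forall b, B b -> forall v, section b [:: x0] v = b v),
      (forall b x, B b -> x != x0 -> exists2 p, p \in A & is_sec b x p)
    & A :=: <<[set p : {perm X} |
                `[< exists b x, [/\ B b, x != x0 & is_sec b x p] >] ]>>].

Definition orbitwise_abelian (A : {group {perm X}}) (B : wmap -> Prop) : Prop :=
  forall a, a \in A ->
    abelian <<[set p : {perm X} | `[< exists b c, [/\ B b, c \in <[a]>,
                 c x0 != x0 & p = secperm b (c x0)] >] ]>>.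

Definition mpA (A : {group {perm X}}) (x : X) : {set {perm X}} :=
  [set c in A | c x0 == x].

Definition Cset (A : {group {perm X}}) (a : {perm X}) (x : X) : {set {perm X}} :=
  [set (c * a * c^-1)%g | c in mpA A x].

Definition orb0 (c : {perm X}) : {set X} := porbit c x0.

Definition Xset (A : {group {perm X}}) (a : {perm X}) (x : X) : {set X} :=
  \bigcup_(c in Cset A a x) (orb0 c :\ x0).

Definition HS (A : {group {perm X}}) (S : wmap -> Prop) (a : {perm X}) (x : X)
  : {set {perm X}} :=
  <<[set p : {perm X} | `[< exists b y, [/\ S b, y \in Xset A a x &
                                           p = secperm b y] >] ]>>.

Definition secprod (b : wmap) (c : {perm X}) : {perm X} :=
  (\prod_(1 <= i < #|orb0 c|) secperm b ((c ^+ i)%g x0))%g.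

Definition sigmaS (A : {group {perm X}}) (S : wmap -> Prop) (a : {perm X}) (x : X)
  : {set {perm X}} :=
  (<<[set p : {perm X} | `[< exists b c, [/\ S b, c \in Cset A a x &
                                            p = secprod b c] >] ]>>
   * [~: HS A S a x, HS A S a x])%g.

Definition SigmaS (A : {group {perm X}}) (S : wmap -> Prop) (P : {set {perm X}})
  : {set {perm X}} :=
  \bigcup_(a in P) \bigcup_(x : X) sigmaS A S a x.

Definition eventually_trivial (A : {group {perm X}}) (S : wmap -> Prop) : Prop :=
  forall a, a \in A -> exists n, forall m, n < m ->
    iter m (SigmaS A S) [set a] \subset [set 1%g].

End CS.

(* Main.v *)
Require Import Defs.
From HB Require Import structures.
From mathcomp Require Import all_boot all_fingroup.
From mathcomp Require Import boolp.

Set Implicit Arguments.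
Unset Strict Implicit.
Unset Printing Implicit Defensive.
Local Open Scope group_scope.

Section Aux.
Variables (X : finType) (x0 : X) (A : {group {perm X}}) (B : wmap X -> Prop).
Hypothesis hCS : CS_group x0 A B.

Lemma sec_val f y p : B f -> is_sec f y p -> forall z, f [:: y; z] = [:: y; p z].
Proof.
case: hCS => [[_ [hT _ _ _]] hSt _ _ _] Bf hs z.
case: (hT f Bf) => hsz hpre _.
have h1 := hs [:: z]; rewrite /section /= in h1.
have h2 := hpre [:: y] [:: z]; rewrite (hSt f Bf y) /= in h2.
by rewrite -(cat_take_drop 1 (f [:: y; z])) h1 h2.
Qed.

Lemma secperm_eq f y p : B f -> is_sec f y p -> secperm f y = p.
Proof.
move=> Bf hs; rewrite /secperm; case: pickP => [q /asboolP hq|].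
  apply/permP => z /=.
  have := sec_val Bf hq z; rewrite (sec_val Bf hs z) => -[] ->//.
by move=> /(_ p); rewrite (asboolT hs).
Qed.

Lemma secE f y : B f -> y != x0 ->
  secperm f y \in A /\ forall z, f [:: y; z] = [:: y; secperm f y z].
Proof.
move=> Bf hy; case: hCS => _ _ _ hsec _.
case: (hsec f y Bf hy) => p pA hs.
by rewrite (secperm_eq Bf hs); split => // z; apply: sec_val.
Qed.

Lemma gen_B S : generates S B -> forall f, gen S f -> B f.
Proof.
case: hCS => [[_ [_ hid hmul hinv]] _ _ _ _] [hSB _].
move=> f; elim.
- exact: hid.
- by move=> s Ss; apply: hSB.
- by move=> f1 g _ ? _ ?; apply: hmul.
move=> g f0 _ Bg fg gf; case: (hinv g Bg) => h Bh [hg gh].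
have -> : f0 = h by apply: funext => w; rewrite -{1}(gh w) fg.
done.
Qed.

Lemma gen_sec S (H : {group {perm X}}) : generates S B ->
  (forall s y, S s -> y != x0 -> secperm s y \in H) ->
  forall f, gen S f -> forall y, y != x0 -> secperm f y \in H.
Proof.
move=> hg hS f gf; have := gen_B hg; move=> gB.
elim: gf => //.
- move=> y hy.
  have Bid : B (fun w => w) by case: hCS => [[_ [_ ? _ _]] _ _ _ _].
  have [_ e] := secE Bid hy.
  suff -> : secperm (fun w => w) y = 1 by apply: group1.
  by apply/permP => z; rewrite perm1; case: (e z) => <-.
- by move=> s Ss y hy; apply: hS.
- move=> f1 g1 gf1 IH1 gg1 IH2 y hy.
  have Bf := gB _ gf1; have Bg := gB _ gg1.
  have Bgf : B (g1 \o f1) by apply: gB; apply: gen_mul.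
  suff -> : secperm (g1 \o f1) y = secperm f1 y * secperm g1 y.
    by rewrite groupM ?IH1 ?IH2.
  apply/permP => z; have [_ e] := secE Bgf hy; have [_ e1] := secE Bf hy.
  have [_ e2] := secE Bg hy.
  have := e z; rewrite /= e1 e2 permM => -[] ->//.
- move=> g1 f1 gg1 IH fg gf y hy.
  have Bg := gB _ gg1.
  have Bf : B f1 by apply: gB; apply: (gen_inv gg1).
  suff -> : secperm f1 y = (secperm g1 y)^-1 by rewrite groupV IH.
  apply/permP => z; have [_ e1] := secE Bf hy; have [_ e2] := secE Bg hy.
  have := fg [:: y; (secperm g1 y)^-1 z].
  by rewrite e2 permKV e1 => -[] ->.
Qed.

End Aux.

Theorem mainTheorem17 (X : finType) (x0 : X)
  (A : {group {perm X}}) (B : wmap X -> Prop) (a : {perm X}) :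
  CS_group x0 A B ->
  1 < #|X| ->
  ([~: A, A] = A)%g ->
  a \in A ->
  [transitive <[a]>, on [set: X] | 'P] ->
  ~ orbitwise_abelian x0 A B /\
  (forall S : wmap X -> Prop, generates S B ->
     [/\ ~ eventually_trivial x0 A S,
         A \subset sigmaS x0 A S a x0
       & forall k, 0 < k -> a \in iter k (SigmaS x0 A S) [set a]]).
Proof.
move=> hCS hX hperf aA htr.
have hreach : forall y, exists2 c, c \in <[a]> & y = c x0.
  by move=> y; have [c cA ->] := atransP2 htr (in_setT x0) (in_setT y); exists c.
have a1 : a != 1.
  apply/eqP => a1; move: hX; rewrite (cardD1 x0) ltnS lt0n => /existsP [y /andP [hy _]].
  have [c] := hreach y; rewrite a1 cycle1 inE => /eqP -> e.
  by rewrite e perm1 eqxx in hy.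
have hAgen := hCS; case: hAgen => _ _ _ _ hAeq.
split.
  move=> hOA; have := hOA a aA; set K := <<_>> => hK.
  have AK : A \subset K.
    rewrite hAeq gen_subG; apply/subsetP => p; rewrite inE => /asboolP [b [x [Bb hx hs]]].
    apply: mem_gen; rewrite inE; apply/asboolP.
    have [c cA e] := hreach x; exists b, c; split => //; first by rewrite -e.
    by rewrite -e (secperm_eq hCS Bb hs).
  have /commG1P hA1 : A \subset 'C(A) by apply: abelianS AK hK.
  by move: aA; rewrite -hperf hA1 inE; apply/negP.
move=> S hS.
set H := HS x0 A S a x0.
have hHsub : A \subset H.
  rewrite hAeq gen_subG; apply/subsetP => p; rewrite inE => /asboolP [b [x [Bb hx hs]]].
  rewrite -(secperm_eq hCS Bb hs).
  have gb : gen S b by case: hS => _; apply.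
  apply: (gen_sec hCS (H := [group of H]) hS _ gb hx).
  move=> s y Ss hy; apply: mem_gen; rewrite inE; apply/asboolP.
  exists s, y; split => //.
  apply/bigcupP; exists a.
    apply/imsetP; exists 1; first by rewrite inE group1 perm1 eqxx.
    by rewrite mul1g invg1 mulg1.
  rewrite !inE hy /orb0 porbitE (atransP htr) ?inE //.
have hsig : A \subset sigmaS x0 A S a x0.
  rewrite -{1}hperf; apply: subset_trans (mulG_subr _ _).
  exact: commgSS.
have hstep : forall P : {set {perm X}}, a \in P -> a \in SigmaS x0 A S P.
  move=> P aP; apply/bigcupP; exists a => //; apply/bigcupP; exists x0 => //.
  exact: (subsetP hsig).
have hit : forall k, a \in iter k (SigmaS x0 A S) [set a].
  by elim => [|k IH] /=; [rewrite inE | apply: hstep].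
split => // het.
have [n hn] := het a aA.
have := hn n.+1 (ltnSn n); move/subsetP/(_ a (hit _)); rewrite inE.
by apply/negP.
Qed.
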